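(* Let $\mathbb{X}\subseteq\mathbb{R}^{d_{\mathbb{X}}}$ and $\tilde{\mathbb{X}}\subseteq\mathbb{R}^{d_{\mathbb{X}}}$, let $p(x)$ be a probability distribution on $\mathbb{X}$ and $p(\tilde x\mid x)$ a conditional distribution on $\tilde{\mathbb{X}}$ (the distribution of augmentations $\tilde x$ of $x$). Let $f_\theta:\mathbb{X}\to\mathbb{R}^{d_{\mathbb{Z}}}$ (encoder; it is also applied to augmentations $\tilde x$), $h_\psi:\mathbb{R}^{d_{\mathbb{Z}}}\to\mathbb{R}^{d_{\mathbb{Z}}}$ (aligner) and a continuously differentiable $g_\phi:\mathbb{R}^{d_{\mathbb{Z}}}\to\mathbb{R}^{d_{\mathbb{X}}}$ (decoder). Define $$\mathcal{L}_{\mathrm{RC}}=\mathbb{E}_{p(x)}\mathbb{E}_{p(\tilde x|x)}\|g_\phi(h_\psi(f_\theta(\tilde x)))-x\|_2,\qquad \mathcal{L}_{\mathrm{CL}}=\mathbb{E}_{p(x)}\mathbb{E}_{p(\tilde x|x)}\|h_\psi(f_\theta(\tilde x))-f_\theta(x)\|_2,$$ $$\mathcal{L}_{\mathrm{reg}}=\mathbb{E}_{p(x)}\|g_\phi(f_\theta(x))-x\|_2 .$$ Let $\lambda_{\max}$ and $\lambda_{\min}$ be the constants defined in the context below. If $\lambda_{\max}$ and $\lambda_{\min}$ are non-zero, then (1) $\mathcal{L}_{\mathrm{CL}}+\frac{1}{\lambda_{\max}}\mathcal{L}_{\mathrm{reg}}\ \ge\ \frac{1}{\lambda_{\max}}\mathcal{L}_{\mathrm{RC}}$,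 and (2) $\mathcal{L}_{\mathrm{RC}}+\mathcal{L}_{\mathrm{reg}}\ \ge\ \lambda_{\min}\,\mathcal{L}_{\mathrm{CL}}$.
   Context: $\|\cdot\|_2$ is the Euclidean norm; all expectations are assumed finite. (In the paper a stop-gradient operator is applied to $f_\theta(x)$ in $\mathcal{L}_{\mathrm{CL}}$ and $\mathcal{L}_{\mathrm{reg}}$; it does not change the values of the losses.) Definition of $\lambda_{\max},\lambda_{\min}$: for each pair $(x,\tilde x)$ set $a=f_\theta(x)$, $b=h_\psi(f_\theta(\tilde x))$. Writing $g_{\phi,j}$ for the $j$-th coordinate of $g_\phi$, by the mean value theorem for each $j=1,\dots,d_{\mathbb{X}}$ choose a point $\xi_j$ on the segment between $a$ and $b$ with $g_{\phi,j}(a)-g_{\phi,j}(b)=\nabla g_{\phi,j}(\xi_j)^\top(a-b)$, and let $G(x,\tilde x)\in\mathbb{R}^{d_{\mathbb{X}}\times d_{\mathbb{Z}}}$ be the matrix whose $j$-th row is $\nabla g_{\phi,j}(\xi_j)^\top$. Let $\hat\lambda_{\max}(x,\tilde x)^2$ and $\hat\lambda_{\min}(x,\tilde x)^2$ be the largest and smallest eigenvalues of $G(x,\tilde x)^\top G(x,\tilde x)$, with $\hat\lambda_{\max},\hat\lambda_{\min}\ge 0$. Then $\lambda_{\max}=\sup_{x,\tilde x}\hat\lambda_{\max}(x,\tilde x)$ and $\lambda_{\min}=\inf_{x,\tilde x}\hat\lambda_{\min}(x,\tilde x)$. *)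

(* Defs.v *)
From HB Require Import structures.
From mathcomp Require Import all_boot all_order all_algebra.
From mathcomp Require Import all_classical all_reals all_analysis.
Set Implicit Arguments. Unset Strict Implicit. Unset Printing Implicit Defensive.
Import Order.TTheory GRing.Theory Num.Theory.
Import numFieldNormedType.Exports.
Local Open Scope classical_set_scope.
Local Open Scope ring_scope.

Definition enorm {R : realType} {n : nat} (v : 'rV[R]_n) : R :=
  Num.sqrt (\sum_(i < n) v 0 i ^+ 2).

Definition ebasis {R : realType} {n : nat} (k : 'I_n) : 'rV[R]_n := delta_mx 0 k.

Definition C1 {R : realType} {m n : nat} (g : 'rV[R]_m -> 'rV[R]_n) : Prop :=
  (forall z, differentiable g z) /\ (forall v : 'rV[R]_m, continuous ('D_v g)).

Definition grad_coord {R : realType} {m n : nat} (g : 'rV[R]_m -> 'rV[R]_n)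
  (j : 'I_n) (z : 'rV[R]_m) : 'rV[R]_m :=
  \row_(k < m) ('D_(ebasis k) g z) 0 j.

Definition on_segment {R : realType} {m : nat} (a b xi : 'rV[R]_m) : Prop :=
  exists2 t : R, 0 <= t <= 1 & xi = (1 - t) *: a + t *: b.

Definition mvt_matrix {R : realType} {m n : nat} (g : 'rV[R]_m -> 'rV[R]_n)
  (xi : 'I_n -> 'rV[R]_m) : 'M[R]_(n, m) :=
  \matrix_(j < n, k < m) grad_coord g j (xi j) 0 k.

Definition mvt_choice {R : realType} {m n : nat} (g : 'rV[R]_m -> 'rV[R]_n)
  (a b : 'rV[R]_m) (xi : 'I_n -> 'rV[R]_m) : Prop :=
  forall j : 'I_n, on_segment a b (xi j) /\
    g a 0 j - g b 0 j = \sum_(k < m) grad_coord g j (xi j) 0 k * (a - b) 0 k.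

Definition eig_max {R : realType} {n : nat} (M : 'M[R]_n) : R :=
  sup [set a : R | eigenvalue M a].
Definition eig_min {R : realType} {n : nat} (M : 'M[R]_n) : R :=
  inf [set a : R | eigenvalue M a].

Definition lam_hat_max {R : realType} {m n : nat} (G : 'M[R]_(n, m)) : R :=
  Num.sqrt (eig_max (G^T *m G)).
Definition lam_hat_min {R : realType} {m n : nat} (G : 'M[R]_(n, m)) : R :=
  Num.sqrt (eig_min (G^T *m G)).

(* Main.v *)
Require Import Defs.
From HB Require Import structures.
From mathcomp Require Import all_boot all_order all_algebra.
From mathcomp Require Import all_classical all_reals all_analysis.
From mathcomp Require Import ring lra.
Import Order.TTheory GRing.Theory Num.Theory.
Import numFieldNormedType.Exports.
Local Open Scope classical_set_scope.
Local Open Scope ring_scope.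


Definition form {R : realType} {n} (B : 'M[R]_n) (u v : 'rV[R]_n) : R := (u *m B *m v^T) 0 0.

Lemma formE {R : realType} {n} (B : 'M[R]_n) u v :
  form B u v = \sum_(j < n) (\sum_(i < n) u 0 i * B i j) * v 0 j.
Proof. by rewrite /form mxE; apply: eq_bigr => j _; rewrite !mxE. Qed.

Lemma form1E {R : realType} {n} (u v : 'rV[R]_n) : form 1%:M u v = \sum_(i < n) u 0 i * v 0 i.
Proof. by rewrite /form mulmx1 mxE; apply: eq_bigr => j _; rewrite !mxE. Qed.

Lemma form_sym {R : realType} {n} (B : 'M[R]_n) u v : B^T = B -> form B u v = form B v u.
Proof.
move=> sB; rewrite /form.
have -> : (u *m B *m v^T) 0 0 = ((u *m B *m v^T)^T) 0 0 by rewrite [RHS]mxE.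
by rewrite !trmx_mul trmxK sB mulmxA.
Qed.


Lemma formDl {R : realType} {n} (B : 'M[R]_n) u v w : form B (u + v) w = form B u w + form B v w.
Proof. by rewrite /form !mulmxDl mxE. Qed.
Lemma formZl {R : realType} {n} (B : 'M[R]_n) c u w : form B (c *: u) w = c * form B u w.
Proof. by rewrite /form -!scalemxAl mxE. Qed.
Lemma formDr {R : realType} {n} (B : 'M[R]_n) u v w : form B u (v + w) = form B u v + form B u w.
Proof. by rewrite /form linearD /= !mulmxDr mxE. Qed.
Lemma formZr {R : realType} {n} (B : 'M[R]_n) c u w : form B u (c *: w) = c * form B u w.
Proof. by rewrite /form linearZ /= -!scalemxAr mxE. Qed.
Lemma formNl {R : realType} {n} (B : 'M[R]_n) u w : form B (- u) w = - form B u w.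
Proof. by rewrite -scaleN1r formZl mulN1r. Qed.
Lemma formNr {R : realType} {n} (B : 'M[R]_n) u w : form B u (- w) = - form B u w.
Proof. by rewrite -scaleN1r formZr mulN1r. Qed.
Lemma form0l {R : realType} {n} (B : 'M[R]_n) w : form B 0 w = 0.
Proof. by rewrite /form !mul0mx mxE. Qed.

Lemma quad_le {R : realType} (a b c : R) : (forall t, 0 <= a * t ^+ 2 + 2 * b * t + c) -> 0 <= a -> 0 <= c ->
  b ^+ 2 <= a * c.
Proof.
move=> H a0 c0; have [az|anz] := eqVneq a 0.
  have [->|bnz] := eqVneq b 0; first by rewrite expr0n /= mulr_ge0.
  have := H (- (c + 1) / (2 * b)).
  have -> : 2 * b * (- (c + 1) / (2 * b)) = - (c + 1) by field; rewrite bnz.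
  rewrite az mul0r add0r => h; lra.
have := H (- b / a).
have E : a * (a * (- b / a) ^+ 2 + 2 * b * (- b / a) + c) = a * c - b ^+ 2 by field.
move=> h; have : 0 <= a * (a * (- b / a) ^+ 2 + 2 * b * (- b / a) + c) by rewrite mulr_ge0.
rewrite E; lra.
Qed.

Lemma form_cs {R : realType} {n} (B : 'M[R]_n) u v : B^T = B -> (forall w, 0 <= form B w w) ->
  form B u v ^+ 2 <= form B u u * form B v v.
Proof.
move=> sB psd; apply: quad_le => //= t.
have := psd (t *: u + v).
rewrite formDl !formDr !formZl !formZr (form_sym B v u sB).
suff -> : t * (t * form B u u) + t * form B u v + (t * form B u v + form B v v) =
  form B u u * t ^+ 2 + 2 * form B u v * t + form B v v by [].
ring.
Qed.


Lemma form1_ge0 {R : realType} {n} (u : 'rV[R]_n) : 0 <= form 1%:M u u.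
Proof. by rewrite form1E sumr_ge0 // => i _; rewrite -expr2 sqr_ge0. Qed.

Lemma form1_eq0 {R : realType} {n} (u : 'rV[R]_n) : form 1%:M u u = 0 -> u = 0.
Proof.
rewrite form1E => S; apply/rowP => i; rewrite [RHS]mxE.
have /(_ i isT)/eqP := psumr_eq0P (fun i _ => (ltac:(rewrite -expr2; exact: sqr_ge0) : 0 <= u 0 i * u 0 i)) S.
by rewrite mulf_eq0 orbb => /eqP.
Qed.

Lemma enormE {R : realType} {n} (u : 'rV[R]_n) : enorm u = Num.sqrt (form 1%:M u u).
Proof. by rewrite /enorm form1E; congr Num.sqrt; apply: eq_bigr => i _; rewrite expr2. Qed.

Lemma enorm_ge0 {R : realType} {n} (u : 'rV[R]_n) : 0 <= enorm u.
Proof. exact: sqrtr_ge0. Qed.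

Lemma enormN {R : realType} {n} (u : 'rV[R]_n) : enorm (- u) = enorm u.
Proof. by rewrite !enormE formNl formNr opprK. Qed.

Lemma enormD {R : realType} {n} (u v : 'rV[R]_n) : enorm (u + v) <= enorm u + enorm v.
Proof.
have s1 : (1%:M : 'M[R]_n)^T = 1%:M by rewrite tr_scalar_mx.
have cs := form_cs _ u v s1 (@form1_ge0 _ n).
have e : form 1%:M (u + v) (u + v) = form 1%:M u u + 2 * form 1%:M u v + form 1%:M v v.
  by rewrite formDl !formDr (form_sym _ v u s1); ring.
have p := form1_ge0 (u + v); have pa := form1_ge0 u; have pb := form1_ge0 v.
rewrite !enormE; set a := form 1%:M u u in cs e pa *; set b := form 1%:M v v in cs e pb *.
set c := form 1%:M u v in cs e *; rewrite e; rewrite e in p.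
have sa := sqr_sqrtr pa; have sb := sqr_sqrtr pb; have sp := sqr_sqrtr p.
have ga := sqrtr_ge0 a; have gb := sqrtr_ge0 b; have gp := sqrtr_ge0 (a + 2 * c + b).
set A := Num.sqrt a in sa ga *; set B := Num.sqrt b in sb gb *.
set S := Num.sqrt (a + 2 * c + b) in sp gp *.
have hAB : 0 <= A * B by rewrite mulr_ge0.
have hc : c <= A * B.
  have [c0|c0] := lerP c 0; first exact: le_trans c0 hAB.
  have := @ler_sqr _ c (A * B); rewrite !nnegrE => <- //; last exact: ltW.
  by rewrite exprMn sa sb.
have := @ler_sqr _ S (A + B); rewrite !nnegrE => <- //; last by rewrite addr_ge0.
rewrite sp; nra.
Qed.


Lemma formMD {R : realType} {n} (A C : 'M[R]_n) u v : form (A + C) u v = form A u v + form C u v.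
Proof. by rewrite /form mulmxDr mulmxDl mxE. Qed.
Lemma formMZ {R : realType} {n} (A : 'M[R]_n) c u v : form (c *: A) u v = c * form A u v.
Proof. by rewrite /form -scalemxAr -scalemxAl mxE. Qed.
Lemma formMN {R : realType} {n} (A : 'M[R]_n) u v : form (- A) u v = - form A u v.
Proof. by rewrite -scaleN1r formMZ mulN1r. Qed.
Lemma formMs {R : realType} {n} (c : R) u v : form (c%:M : 'M[R]_n) u v = c * form 1%:M u v.
Proof. by rewrite -formMZ scalemx1. Qed.

Lemma cont_sum_seq {R : realType} (T : topologicalType) (I : Type) (r : seq I) (F : I -> T -> R) :
  (forall i, continuous (F i)) -> continuous (fun x => \sum_(i <- r) F i x).
Proof.
move=> H; elim: r => [|i r IH].
  under eq_fun do rewrite big_nil; exact: cst_continuous.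
under eq_fun do rewrite big_cons.
by move=> x; apply: cvgD; [exact: H | exact: IH].
Qed.

Lemma cont_sum {R : realType} (T : topologicalType) (n : nat) (F : 'I_n -> T -> R) :
  (forall i, continuous (F i)) -> continuous (fun x => \sum_(i < n) F i x).
Proof. exact: cont_sum_seq. Qed.

Lemma form_cont {R : realType} {n} (B : 'M[R]_n) : continuous (fun v : 'rV[R]_n => form B v v).
Proof.
have -> : (fun v : 'rV[R]_n => form B v v) =
   (fun v => \sum_(j < n) (\sum_(i < n) v 0 i * B i j) * v 0 j).
  by apply: funext => v; rewrite formE.
apply: cont_sum => j; move=> x; apply: (@continuousM _ _ (fun v : 'rV[R]_n => \sum_(i < n) v 0 i * B i j) (fun v => v 0 j)).
  apply: cont_sum => i y; apply: (@continuousM _ _ (fun v : 'rV[R]_n => v 0 i) (fun _ => B i j)).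
    exact: coord_continuous.
  exact: cst_continuous.
exact: coord_continuous.
Qed.

Lemma form_scale {R : realType} {n} (B : 'M[R]_n) c u : form B (c *: u) (c *: u) = c ^+ 2 * form B u u.
Proof. by rewrite formZl formZr mulrA expr2. Qed.

Lemma form_eig {R : realType} {n} (B : 'M[R]_n) a u : u *m B = a *: u -> form B u u = a * form 1%:M u u.
Proof. by move=> Hu; rewrite /form Hu mulmx1 -scalemxAl mxE. Qed.

Lemma max_eig {R : realType} {n} (B : 'M[R]_n) : (0 < n)%N -> B^T = B ->
  exists M, eig_max B = M /\ forall w, form B w w <= M * form 1%:M w w.
Proof.
move=> n0 sB.
pose S := [set v : 'rV[R]_n | form 1%:M v v = 1].
have S0 : S !=set0.
  exists (delta_mx 0 (Ordinal n0)); rewrite /S /= /form mulmx1 trmx_delta mul_delta_mx.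
  by rewrite mxE !eqxx.
have Scl : closed S.
  apply: (@preimage_closed _ _ (fun v : 'rV[R]_n => form 1%:M v v) [set x | x = 1]).
    by move=> v _; apply: form_cont.
  exact: closed_eq.
have Scp : compact S.
  have Bc : compact [set v : 'rV[R]_n | forall i, (`[-1, 1]%classic : set R) (v ord0 i)].
    exact: (@rV_compact R n (fun _ => `[-1, 1]%classic) (fun _ => @segment_compact R (-1) 1)).
  apply: (@subclosed_compact _ S _ Scl Bc).
  move=> v; rewrite /S /= form1E => Sv i.
  have : v 0 i * v 0 i <= 1.
    rewrite -Sv (bigD1 i) //= lerDl sumr_ge0 // => k _; rewrite -expr2; exact: sqr_ge0.
  rewrite (ord1 ord0) /= in_itv /= => h; apply/andP; split; nra.
have [v0 v0S v0max] := compact_EVT_max S0 Scp (continuous_subspaceT (@form_cont _ n B)).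
move: v0S; rewrite inE /S /= => v0S.
set M := form B v0 v0.
have bound : forall w, form B w w <= M * form 1%:M w w.
  move=> w; have [w0|wn0] := eqVneq (form 1%:M w w) 0.
    by rewrite (form1_eq0 _ w0) !form0l mulr0.
  have wp : 0 < form 1%:M w w by rewrite lt_def wn0 form1_ge0.
  set s := form 1%:M w w in wn0 wp *.
  have ss := sqr_sqrtr (ltW wp).
  have sp : 0 < Num.sqrt s by rewrite sqrtr_gt0.
  pose r := (Num.sqrt s)^-1.
  have r2 : r ^+ 2 * s = 1 by rewrite /r exprVn ss mulVf.
  have := v0max (r *: w); rewrite inE /S /= form_scale r2 => /(_ erefl).
  rewrite form_scale => h.
  have : r ^+ 2 * form B w w * s <= M * s by rewrite ler_pM2r.
  by rewrite mulrAC r2 mul1r.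
pose B' := M%:M - B.
have sB' : B'^T = B' by rewrite /B' linearB /= tr_scalar_mx sB.
have fB' : forall w, form B' w w = M * form 1%:M w w - form B w w.
  by move=> w; rewrite /B' formMD formMN formMs.
have psd : forall w, 0 <= form B' w w by move=> w; rewrite fB' subr_ge0.
have z : form B' v0 v0 = 0 by rewrite fB' v0S mulr1 subrr.
have ortho : forall w, form B' v0 w = 0.
  move=> w; have := form_cs _ v0 w sB' psd; rewrite z mul0r => h.
  by apply/eqP; rewrite -sqrf_eq0 eq_le h sqr_ge0.
have v0B : v0 *m B = M *: v0.
  have e : form B' v0 (v0 *m B') = form 1%:M (v0 *m B') (v0 *m B') by rewrite /form mulmx1.
  move: (ortho (v0 *m B')); rewrite e => /form1_eq0; rewrite /B' mulmxBr mul_mx_scalar => /eqP; rewrite subr_eq0 => /eqP <-.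
  by [].
have v0n : v0 != 0 by apply/eqP => v00; move: v0S; rewrite v00 form0l => /eqP; rewrite eq_sym oner_eq0.
have eM : eigenvalue B M by apply/eigenvalueP; exists v0.
have ub : ubound [set a | eigenvalue B a] M.
  move=> a /eigenvalueP [u Hu un0].
  have up : 0 < form 1%:M u u by rewrite lt_def form1_ge0 andbT; apply: contra un0 => /eqP/form1_eq0 ->.
  by have := bound u; rewrite (form_eig _ _ _ Hu) ler_pM2r.
exists M; split => //.
apply/le_anti/andP; split.
  by apply: ge_sup => //; exists M.
by apply: sup_upper_bound => //; split; [exists M | exists M].
Qed.

Lemma min_eig {R : realType} {n} (B : 'M[R]_n) : (0 < n)%N -> B^T = B ->
  exists m, eig_min B = m /\ forall w, m * form 1%:M w w <= form B w w.
Proof.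
move=> n0 sB; have sB' : (- B)^T = - B by rewrite linearN /= sB.
have [M [eM bd]] := @max_eig _ _ (- B) n0 sB'.
exists (- M); split.
  rewrite /eig_min /inf.
  have -> : [set - x | x in [set a | eigenvalue B a]] = [set a | eigenvalue (- B) a].
    apply/seteqP; split => a /=.
      move=> [x /eigenvalueP [v Hv vn] <-]; apply/eigenvalueP; exists v => //.
      by rewrite mulmxN Hv scaleNr.
    move/eigenvalueP => [v Hv vn]; exists (- a); last by rewrite opprK.
    apply/eigenvalueP; exists v => //.
    by rewrite scaleNr -Hv mulmxN opprK.
  by rewrite -/(eig_max _) eM.
move=> w; have := bd w; rewrite formMN mulNr; lra.
Qed.

Lemma formG {R : realType} {p n} (G : 'M[R]_(p, n)) u :
  form 1%:M (u *m G^T) (u *m G^T) = form (G^T *m G) u u.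
Proof. by rewrite /form !mulmx1 trmx_mul trmxK !mulmxA. Qed.

Lemma symG {R : realType} {p n} (G : 'M[R]_(p, n)) : (G^T *m G)^T = G^T *m G.
Proof. by rewrite trmx_mul trmxK. Qed.

Lemma lam_max_bound {R : realType} {p n} (G : 'M[R]_(p, n)) u :
  enorm (u *m G^T) <= lam_hat_max G * enorm u.
Proof.
rewrite !enormE formG.
have [n0|n0] := posnP n.
  subst n; rewrite formE big_ord0 sqrtr0; apply: mulr_ge0; exact: sqrtr_ge0.
have [M [eM bd]] := @max_eig _ _ _ n0 (symG G).
rewrite /lam_hat_max eM.
apply: le_trans (ler_wsqrtr (bd u)) _.
have [M0|M0] := lerP 0 M; first by rewrite sqrtrM.
have : M * form 1%:M u u <= 0 by rewrite mulr_le0_ge0 ?(ltW M0) ?form1_ge0.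
rewrite -sqrtr_eq0 => /eqP ->; apply: mulr_ge0; exact: sqrtr_ge0.
Qed.

Lemma lam_min_bound {R : realType} {p n} (G : 'M[R]_(p, n)) u :
  lam_hat_min G * enorm u <= enorm (u *m G^T).
Proof.
rewrite !enormE formG.
have [n0|n0] := posnP n.
  subst n; rewrite form1E big_ord0 sqrtr0 mulr0; exact: sqrtr_ge0.
have [m [eM bd]] := @min_eig _ _ _ n0 (symG G).
rewrite /lam_hat_min eM.
have [m0|m0] := lerP 0 m; last first.
  have : m <= 0 by exact: ltW.
  rewrite -sqrtr_eq0 => /eqP ->; rewrite mul0r; exact: sqrtr_ge0.
rewrite -sqrtrM //; exact: ler_wsqrtr.
Qed.

Theorem theorem1 (R : realType) (dX dZ : nat)
  (SX SXt : set 'rV[R]_dX)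
  (d : measure_display) (Omega : measurableType d) (P : probability Omega R)
  (x xt : Omega -> 'rV[R]_dX)
  (f : 'rV[R]_dX -> 'rV[R]_dZ) (h : 'rV[R]_dZ -> 'rV[R]_dZ)
  (g : 'rV[R]_dZ -> 'rV[R]_dX)
  (xi : 'rV[R]_dX -> 'rV[R]_dX -> 'I_dX -> 'rV[R]_dZ)
  (lmax lmin : R) :
  (forall w, SX (x w)) ->
  (forall w, SXt (xt w)) ->
  C1 g ->
  (forall a, SX a -> forall b, SXt b -> mvt_choice g (f a) (h (f b)) (xi a b)) ->
  lmax = sup [set lam_hat_max (mvt_matrix g (xi a b)) | a in SX & b in SXt] ->
  lmin = inf [set lam_hat_min (mvt_matrix g (xi a b)) | a in SX & b in SXt] ->
  P.-integrable setT (fun w => (enorm (g (h (f (xt w))) - x w))%:E) ->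
  P.-integrable setT (fun w => (enorm (h (f (xt w)) - f (x w)))%:E) ->
  P.-integrable setT (fun w => (enorm (g (f (x w)) - x w))%:E) ->
  lmax != 0 -> lmin != 0 ->
  let L_RC := ('E_P[fun w => enorm (g (h (f (xt w))) - x w)])%E in
  let L_CL := ('E_P[fun w => enorm (h (f (xt w)) - f (x w))])%E in
  let L_reg := ('E_P[fun w => enorm (g (f (x w)) - x w)])%E in
  ((lmax^-1)%:E * L_RC <= L_CL + (lmax^-1)%:E * L_reg)%E /\
  (lmin%:E * L_CL <= L_RC + L_reg)%E.
Proof.
move=> HX HXt _ Hmvt Hlmax Hlmin iRC iCL ireg lmax0 lmin0 L_RC L_CL L_reg.
set TM := [set lam_hat_max (mvt_matrix g (xi a b)) | a in SX & b in SXt] in Hlmax.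
set Tm := [set lam_hat_min (mvt_matrix g (xi a b)) | a in SX & b in SXt] in Hlmin.
have hsM : has_sup TM.
  by apply: contrapT => nh; move: lmax0; rewrite Hlmax (sup_out nh) eqxx.
have hsm : has_inf Tm.
  by apply: contrapT => nh; move: lmin0; rewrite Hlmin (inf_out nh) eqxx.
have lmax_gt0 : 0 < lmax.
  rewrite lt_def lmax0 /=; have [z Tz] := hsM.1.
  have z0 : 0 <= z by case: Tz => a _ [b _ <-]; exact: sqrtr_ge0.
  by rewrite Hlmax; apply: le_trans z0 (sup_upper_bound hsM Tz).
have key : forall w, let a' := f (x w) in let b' := h (f (xt w)) in
    enorm (g a' - g b') <= lmax * enorm (a' - b') /\
    lmin * enorm (a' - b') <= enorm (g a' - g b').
  move=> w a' b'.
  pose G := mvt_matrix g (xi (x w) (xt w)).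
  have eG : g a' - g b' = (a' - b') *m G^T.
    apply/rowP => j; rewrite !mxE /a' /b'; have [_ ->] := Hmvt _ (HX w) _ (HXt w) j.
    by apply: eq_bigr => k _; rewrite !mxE mulrC.
  rewrite eG; split.
    apply: le_trans (lam_max_bound G (a' - b')) _.
    apply: ler_wpM2r; first exact: enorm_ge0.
    rewrite Hlmax; apply: sup_upper_bound => //.
    by exists (x w) => //; exists (xt w).
  apply: le_trans (lam_min_bound G (a' - b')).
  apply: ler_wpM2r; first exact: enorm_ge0.
  rewrite Hlmin; apply: ge_inf; first exact: hsm.2.
  by exists (x w) => //; exists (xt w).
have p1 : forall w, lmax^-1 * enorm (g (h (f (xt w))) - x w) <=
    enorm (h (f (xt w)) - f (x w)) + lmax^-1 * enorm (g (f (x w)) - x w).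
  move=> w; have /= [k1 _] := key w.
  set a' := f (x w) in k1 *; set b' := h (f (xt w)) in k1 *.
  have e1 : g b' - x w = (g b' - g a') + (g a' - x w) by rewrite addrA subrK.
  have t1 : enorm (g b' - x w) <= lmax * enorm (b' - a') + enorm (g a' - x w).
    rewrite e1; apply: le_trans (enormD _ _) _; apply: lerD => //.
    by rewrite -opprB enormN -(opprB a') enormN.
  have il : 0 <= lmax^-1 by rewrite invr_ge0 ltW.
  apply: le_trans (ler_wpM2l il t1) _.
  by rewrite mulrDr mulrA mulVf // mul1r.
have p2 : forall w, lmin * enorm (h (f (xt w)) - f (x w)) <=
    enorm (g (h (f (xt w))) - x w) + enorm (g (f (x w)) - x w).
  move=> w; have /= [_ k2] := key w.
  set a' := f (x w) in k2 *; set b' := h (f (xt w)) in k2 *.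
  have e2 : g a' - g b' = (g a' - x w) + (x w - g b') by rewrite addrA subrK.
  rewrite -(opprB a') enormN; apply: le_trans k2 _.
  rewrite e2 addrC; apply: le_trans (enormD _ _) _.
  by rewrite -(opprB (g b')) enormN.
rewrite /L_RC /L_CL /L_reg unlock; split.
  rewrite -!integralZl // -integralD //; last exact: integrableZl.
  apply: le_integral => //; first exact: integrableZl.
    by apply: integrableD => //; exact: integrableZl.
  by move=> w _; rewrite -!EFinM -EFinD lee_fin; exact: p1.
rewrite -integralZl // -integralD //.
apply: le_integral => //; first exact: integrableZl.
  exact: integrableD.
by move=> w _; rewrite -!EFinM -EFinD lee_fin; exact: p2.
Qed.
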